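(* For every positive integer $n$, the Logarithmic Least Squares Method satisfies invariance to $\alpha$-transformation on a triad: if $\mathbf{A},\hat{\mathbf{A}}\in\mathcal{A}^{n\times n}$ and $\hat{\mathbf{A}}$ is obtained from $\mathbf{A}$ by an $\alpha$-transformation on a triad, then $\mathbf{w}^{LLSM}(\mathbf{A}) = \mathbf{w}^{LLSM}(\hat{\mathbf{A}})$.
   Context: A pairwise comparison matrix of size $n$ is a matrix $\mathbf{A} = [a_{i,j}]$ with positive entries and $a_{j,i} = 1/a_{i,j}$ for all $i,j$; $\mathcal{A}^{n\times n}$ denotes the set of these. The Logarithmic Least Squares Method assigns to $\mathbf{A}$ the minimizer $\mathbf{w}^{LLSM}(\mathbf{A})$, over vectors $\mathbf{w}$ with positive entries summing to 1, of $\sum_{i,j}[\log a_{i,j} - \log(w_i/w_j)]^2$; equivalently $w^{LLSM}_i(\mathbf{A}) = \prod_j a_{i,j}^{1/n}/\sum_k \prod_j a_{k,j}^{1/n}$. An $\alpha$-transformation on the triad $(i,j,k)$ (three distinct indices), with $\alpha>0$, maps $\mathbf{A}$ to $\hat{\mathbf{A}}$ with $\hat a_{i,j} = \alpha a_{i,j}$, $\hat a_{j,i} = a_{j,i}/\alpha$, $\hat a_{j,k} = \alpha a_{j,k}$, $\hat a_{k,j} = a_{k,j}/\alpha$, $\hat a_{k,i} = \alpha a_{k,i}$, $\hat a_{i,k} = a_{i,k}/\alpha$, all other entries unchanged. *)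

(* Defs.v *)
From mathcomp Require Import all_boot all_order all_algebra.
From mathcomp Require Import reals exp.
Set Implicit Arguments. Unset Strict Implicit. Unset Printing Implicit Defensive.
Import Order.TTheory GRing.Theory Num.Theory.
Local Open Scope ring_scope.

Definition is_PCM (R : realType) (n : nat) (A : 'M[R]_n) : Prop :=
  (forall i j, 0 < A i j) /\ (forall i j, A j i = (A i j)^-1).

(* Unnormalized LLSM weight: geometric mean of row i, prod_j a_ij^(1/n). *)
Definition llsm_raw (R : realType) (n : nat) (A : 'M[R]_n) (i : 'I_n) : R :=
  \prod_(j < n) (A i j `^ (n%:R^-1)).

Definition w_llsm (R : realType) (n : nat) (A : 'M[R]_n) : 'I_n -> R :=
  fun i => llsm_raw A i / \sum_(k < n) llsm_raw A k.

Definition alpha_transform (R : realType) (n : nat) (alpha : R)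
    (i j k : 'I_n) (A : 'M[R]_n) : 'M[R]_n :=
  \matrix_(p, q)
    if (p == i) && (q == j) then alpha * A p q
    else if (p == j) && (q == i) then A p q / alpha
    else if (p == j) && (q == k) then alpha * A p q
    else if (p == k) && (q == j) then A p q / alpha
    else if (p == k) && (q == i) then alpha * A p q
    else if (p == i) && (q == k) then A p q / alpha
    else A p q.

(* Main.v *)
Require Import Defs.
From mathcomp Require Import all_boot all_order all_algebra.
From mathcomp Require Import reals exp.
From Stdlib Require Import FunctionalExtensionality.
Import Order.TTheory GRing.Theory Num.Theory.
Local Open Scope ring_scope.

Lemma prod_pair (R : realType) (n : nat) (a b : 'I_n) (x : R) :
  a != b -> x != 0 ->
  \prod_(q < n) (if q == a then x else if q == b then x^-1 else 1) = 1.
Proof.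
move=> ab x0.
rewrite (bigD1 a) //= eqxx (bigD1 b) /=; last by rewrite eq_sym.
rewrite eq_sym (negbTE ab) eqxx big1 ?mulr1 ?mulfV //.
by move=> q /andP [/negbTE -> /negbTE ->].
Qed.

Theorem proposition3p3 (R : realType) (n : nat) (A Ahat : 'M[R]_n)
    (alpha : R) (i j k : 'I_n) :
  (0 < n)%N ->
  is_PCM A -> is_PCM Ahat ->
  0 < alpha -> i != j -> j != k -> i != k ->
  Ahat = alpha_transform alpha i j k A ->
  w_llsm A = w_llsm Ahat.
Proof.
move=> _ [Apos _] _ a0 ij jk ik ->.
set r := (n%:R^-1 : R).
have an0 : alpha != 0 by rewrite gt_eqF.
have ar0 : alpha `^ r != 0 by rewrite gt_eqF // powR_gt0.
have inv : (alpha^-1) `^ r = (alpha `^ r)^-1.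
  by rewrite -powR_inv1 ?ltW // powRAC powR_inv1 // powR_ge0.
set c := fun p q : 'I_n =>
  if (p == i) && (q == j) then alpha
  else if (p == j) && (q == i) then alpha^-1
  else if (p == j) && (q == k) then alpha
  else if (p == k) && (q == j) then alpha^-1
  else if (p == k) && (q == i) then alpha
  else if (p == i) && (q == k) then alpha^-1
  else 1.
have cpos : forall p q, 0 <= c p q.
  move=> p q; rewrite /c; repeat case: ifP => _; rewrite ?invr_ge0 ?ltW //.
have Ec : forall p q, alpha_transform alpha i j k A p q = A p q * c p q.
  move=> p q; rewrite /alpha_transform mxE /c.
  by repeat case: ifP => _; rewrite ?mulr1 // mulrC.
have row : forall p, \prod_(q < n) (c p q `^ r) = 1.
  move=> p.
  have G : forall a b : 'I_n, a != b ->
      (forall q, c p q = if q == a then alpha else if q == b then alpha^-1 else 1) ->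
      \prod_(q < n) (c p q `^ r) = 1.
    move=> a b ab H; rewrite -[RHS](@prod_pair _ _ a b _ ab ar0); apply: eq_bigr => q _.
    rewrite H; case: ifP => _ //; case: ifP => _ //.
    by rewrite powR1.
  have ji : j != i by rewrite eq_sym.
  have kj : k != j by rewrite eq_sym.
  have ki : k != i by rewrite eq_sym.
  case: (eqVneq p i) => [Ei|pi].
    apply: (G j k jk) => q; rewrite /c Ei.
    by case: (eqVneq q i) => [Qi|qi]; case: (eqVneq q j) => [Qj|qj];
      case: (eqVneq q k) => [Qk|qk];
      (try by move: ij jk ik; rewrite -?Qi -?Qj -?Qk ?eqxx);
      rewrite ?Qi ?Qj ?Qk ?eqxx ?(negbTE ij) ?(negbTE jk) ?(negbTE ik) ?(negbTE ji)
        ?(negbTE kj) ?(negbTE ki) ?(negbTE qi) ?(negbTE qj) ?(negbTE qk) /=.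
  case: (eqVneq p j) => [Ej|pj].
    apply: (G k i ki) => q; rewrite /c Ej.
    by case: (eqVneq q i) => [Qi|qi]; case: (eqVneq q j) => [Qj|qj];
      case: (eqVneq q k) => [Qk|qk];
      (try by move: ij jk ik; rewrite -?Qi -?Qj -?Qk ?eqxx);
      rewrite ?Qi ?Qj ?Qk ?eqxx ?(negbTE ij) ?(negbTE jk) ?(negbTE ik) ?(negbTE ji)
        ?(negbTE kj) ?(negbTE ki) ?(negbTE qi) ?(negbTE qj) ?(negbTE qk) /=.
  case: (eqVneq p k) => [Ek|pk].
    apply: (G i j ij) => q; rewrite /c Ek.
    by case: (eqVneq q i) => [Qi|qi]; case: (eqVneq q j) => [Qj|qj];
      case: (eqVneq q k) => [Qk|qk];
      (try by move: ij jk ik; rewrite -?Qi -?Qj -?Qk ?eqxx);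
      rewrite ?Qi ?Qj ?Qk ?eqxx ?(negbTE ij) ?(negbTE jk) ?(negbTE ik) ?(negbTE ji)
        ?(negbTE kj) ?(negbTE ki) ?(negbTE qi) ?(negbTE qj) ?(negbTE qk) /=.
  rewrite big1 // => q _; rewrite /c (negbTE pi) (negbTE pj) (negbTE pk) /=.
  by rewrite powR1.
have raw : forall p, llsm_raw (alpha_transform alpha i j k A) p = llsm_raw A p.
  move=> p; rewrite /llsm_raw -/r.
  rewrite (eq_bigr (fun q => A p q `^ r * c p q `^ r)); last first.
    by move=> q _; rewrite Ec powRM // ltW.
  by rewrite big_split /= row mulr1.
rewrite /w_llsm; apply: functional_extensionality => p.
by rewrite raw (eq_bigr _ (fun q _ => raw q)).
Qed.
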